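(* For every $h\in\{1,\dots,H-1\}$, the estimates produced by FORC satisfy $$\|\hat d^\pi_h-\bar d^\pi_h\|_1\le\|\hat d^\pi_{h-1}-\bar d^\pi_{h-1}\|_1+2C^{\mathbf x}_{h-1}\|\hat d^D_{h-1}-d^D_{h-1}\|_1+C^{\mathbf x}_{h-1}C^{\mathbf a}_{h-1}\|\hat d^{D,\dagger}_{h-1}-d^{D,\dagger}_{h-1}\|_1+\sqrt2\Big\|\hat w^\pi_h-\mathbf E^{\bar\pi}_{h-1}\Big(d^D_{h-1}\frac{\hat d^\pi_{h-1}\wedge C^{\mathbf x}_{h-1}\hat d^D_{h-1}}{\hat d^D_{h-1}}\Big)\Big\|_{2,d^{D,\dagger}_{h-1}},$$ where $\mathbf E^{\pi}_hd:=(\mathbf P^\pi_hd)/d^{D,\dagger}_h$.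
   Context: Setting: finite-horizon episodic MDP $(\mathcal X,\mathcal A,P,H)$, measurable $\mathcal X$, finite $\mathcal A$, $[H]=\{0,\dots,H-1\}$, known initial distribution $d_0$; $d^\pi_h$ density of $x_h$ under Markov policy $\pi$. Low-rank: $P_h(x'\mid x,a)=\langle\phi^*_h(x,a),\mu^*_h(x')\rangle$, $\phi^*_h,\mu^*_h\in\mathbb R^{\mathsf d}$, $\|\phi^*_h\|_\infty\le1$, $\int\|\mu^*_h\|_1\le B^\mu$; $\mu^*$ known. Notation: $a\wedge b=\min(a,b)$, $0/0:=0$; $(\mathbf P^\pi_hd)(x'):=\iint P_h(x'\mid x,a)\pi_h(a\mid x)d(x)\mathrm dx\,\mathrm da$ for nonnegative $\pi_h$; $\|g\|_{2,\nu}:=(\int g^2\,\mathrm d\nu)^{1/2}$. Offline data: $\mathcal D_h=\{(x_h^{(i)},a_h^{(i)},x_{h+1}^{(i)})\}$, tuples generated by an arbitrary roll-in to $x_h$, then $a_h\sim\pi^D_h(\cdot\mid x_h)$ (known Markov single-step policy), then $x_{h+1}\sim P_h$ (i.i.d. conditionally on earlier data); $d^D_h,d^{D,\dagger}_h$ marginal densities of $x_h,x_{h+1}$ in $\mathcal D_h$. Clipped occupancy: $\bar\pi_h:=\pi_h\wedge C^{\mathbf a}_h\pi^D_h$, $\bar d^\pi_0=d_0$, $\bar d^\pi_h=\mathbf P^{\bar\pi}_{h-1}(\bar d^\pi_{h-1}\wedge C^{\mathbf x}_{h-1}d^D_{h-1})$. Algorithm FORC: with $\mathcal F_h:=\{\langle\mu^*_{h-1},\theta\rangle\in\Delta(\mathcal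 X):\|\theta\|_\infty\le1\}$ and $\mathcal W_h:=\{w=\langle\mu^*_{h-1},\theta^{\rm up}\rangle/\langle\mu^*_{h-1},\theta^{\rm down}\rangle:\|w\|_\infty\le C^{\mathbf x}_{h-1}C^{\mathbf a}_{h-1}\}$, set $\hat d^\pi_0=d_0$; for $h=1,\dots,H$: split $\mathcal D_{h-1}$ randomly into $\mathcal D^{\rm mle}$ ($n_{\rm mle}$) and $\mathcal D^{\rm reg}$ ($n_{\rm reg}$); $\hat d^D_{h-1}\in\arg\max_{f\in\mathcal F_{h-1}}\sum_{\mathcal D^{\rm mle}}\log f(x^{(i)}_{h-1})$, $\hat d^{D,\dagger}_{h-1}\in\arg\max_{f\in\mathcal F_h}\sum_{\mathcal D^{\rm mle}}\log f(x^{(i)}_h)$; $\hat w^\pi_h\in\arg\min_{w\in\mathcal W_h}\frac1{n_{\rm reg}}\sum_{\mathcal D^{\rm reg}}\big(w(x^{(i)}_h)-\tilde w(x^{(i)}_{h-1})\frac{\bar\pi_{h-1}(a^{(i)}_{h-1}\mid x^{(i)}_{h-1})}{\pi^D_{h-1}(a^{(i)}_{h-1}\mid x^{(i)}_{h-1})}\big)^2$ with $\tilde w=(\hat d^\pi_{h-1}\wedge C^{\mathbf x}_{h-1}\hat d^D_{h-1})/\hat d^D_{h-1}$; $\hat d^\pi_h:=\hat w^\pi_h\hat d^{D,\dagger}_{h-1}$. *)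

(* Defs.v *)
From mathcomp Require Import all_boot all_order all_algebra.
From mathcomp Require Import all_classical all_reals all_analysis.
Set Implicit Arguments. Unset Strict Implicit. Unset Printing Implicit Defensive.
Import Order.TTheory GRing.Theory Num.Theory.
Local Open Scope classical_set_scope.
Local Open Scope ring_scope.

Section FORCdefs.
Context {dX : measure_display} {X : measurableType dX} {R : realType}.
Context (mu : {measure set X -> \bar R}) (A : finType).

(* Low-rank transition density P_h(x'|x,a) = <phi_h(x,a), mu*_h(x')>. *)
Definition Plr (dd : nat) (phi : nat -> X -> A -> 'I_dd -> R)
  (mus : nat -> X -> 'I_dd -> R) (h : nat) (x : X) (a : A) (x' : X) : R :=
  \sum_(i < dd) phi h x a i * mus h x' i.

Definition lin (dd : nat) (m : X -> 'I_dd -> R) (th : 'I_dd -> R) (x : X) : R :=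
  \sum_(i < dd) m x i * th i.

Definition is_density (f : X -> R) : Prop :=
  measurable_fun setT f /\ (forall x, 0 <= f x) /\
  (\int[mu]_x (f x)%:E = 1)%E.

Definition is_policy (p : X -> A -> R) : Prop :=
  (forall x a, 0 <= p x a) /\ (forall x, \sum_(a : A) p x a = 1) /\
  (forall a, measurable_fun setT (fun x => p x a)).

Definition Pop (P : X -> A -> X -> R) (p : X -> A -> R) (d : X -> R) (x' : X) : R :=
  fine (\int[mu]_x (\sum_(a : A) P x a x' * p x a * d x)%:E).

Definition clipPol (p pD : X -> A -> R) (Ca : R) (x : X) (a : A) : R :=
  Order.min (p x a) (Ca * pD x a).

Fixpoint dbar (P : nat -> X -> A -> X -> R) (pi piD : nat -> X -> A -> R)
  (Cx Ca : nat -> R) (d0 : X -> R) (dD : nat -> X -> R) (h : nat) : X -> R :=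
  match h with
  | 0%N => d0
  | k.+1 => Pop (P k) (clipPol (pi k) (piD k) (Ca k))
              (fun x => Order.min (dbar P pi piD Cx Ca d0 dD k x) (Cx k * dD k x))
  end.

Definition L1 (f : X -> R) : \bar R := \int[mu]_x (`|f x|)%:E.

(* weighted L2 norm ||f||_{2,nu} with d nu = g d mu *)
Definition L2w (g f : X -> R) : \bar R :=
  poweR (\int[mu]_x (f x ^+ 2 * g x)%:E) (2^-1).

(* hypothesis class F_h (mus_prev = mu*_{h-1}) *)
Definition Fcls (dd : nat) (mus_prev : X -> 'I_dd -> R) (f : X -> R) : Prop :=
  (exists th : 'I_dd -> R, (forall i, `|th i| <= 1) /\ f = lin mus_prev th) /\
  is_density f.

Definition Wcls (dd : nat) (mus_prev : X -> 'I_dd -> R) (C : R) (w : X -> R) : Prop :=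
  (exists thu thd : 'I_dd -> R, forall x, w x = lin mus_prev thu x / lin mus_prev thd x) /\
  (forall x, 0 <= w x /\ `|w x| <= C).

(* F_h indexed by h; F_0 (not given a low-rank form in the paper since
   mu*_{-1} does not exist) is read as Delta(X). *)
Definition FclsIdx (dd : nat) (mus : nat -> X -> 'I_dd -> R) (h : nat) (f : X -> R) : Prop :=
  match h with
  | 0%N => is_density f
  | j.+1 => Fcls (mus j) f
  end.

Definition Eop (P : X -> A -> X -> R) (p : X -> A -> R) (dDdag : X -> R)
  (d : X -> R) (x : X) : R := Pop P p d x / dDdag x.

Definition wtil (Cx : R) (dhat dDhat : X -> R) (x : X) : R :=
  Order.min (dhat x) (Cx * dDhat x) / dDhat x.

Definition regLoss (Dreg : seq (X * A * X)) (wt : X -> R) (pbar pD : X -> A -> R)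
  (w : X -> R) : R :=
  (size Dreg)%:R^-1 *
  \sum_(t <- Dreg) (w t.2 - wt t.1.1 * (pbar t.1.1 t.1.2 / pD t.1.1 t.1.2)) ^+ 2.

End FORCdefs.

(* Main.v *)
Require Import Defs.
From mathcomp Require Import all_boot all_order all_algebra.
From mathcomp Require Import all_classical all_reals all_analysis.
From mathcomp Require Import measurable_realfun ring lra.
Set Implicit Arguments. Unset Strict Implicit. Unset Printing Implicit Defensive.
Import Order.TTheory GRing.Theory Num.Theory.
Local Open Scope classical_set_scope.
Local Open Scope ring_scope.
Lemma measurable_invr (R : realType) : measurable_fun [set: R] (@GRing.inv R).
Proof.
have -> : [set: R] = ~` [set x | x = 0] `|` [set x | x = 0] by rewrite setvU.
have m0 : measurable [set x : R | x = 0].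
  by apply: closed_measurable; exact: closed_eq.
apply/measurable_funU => //; first exact: measurableC.
split.
  apply: open_continuous_measurable_fun; first exact/closed_openC/closed_eq.
  move=> x; rewrite inE /= => /eqP x0; exact: inv_continuous.
move=> _ B mB.
have [B0|B0] := pselect (B 0).
  suff -> : [set x : R | x = 0] `&` GRing.inv @^-1` B = [set x | x = 0] by [].
  by apply/seteqP; split => [x []//|x /= ->]; split => //=; rewrite invr0.
suff -> : [set x : R | x = 0] `&` GRing.inv @^-1` B = set0 by [].
by apply/seteqP; split => [x [/= -> ]|x //]; rewrite invr0.
Qed.

Lemma measurable_divr d (T : measurableType d) (R : realType) (f g : T -> R) :
  measurable_fun [set: T] f -> measurable_fun [set: T] g ->
  measurable_fun [set: T] (fun x => f x / g x).
Proof.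
move=> mf mg; apply: measurable_funM => //.
exact: (measurableT_comp (@measurable_invr R) mg).
Qed.

Lemma mEF d (T : measurableType d) (R : realType) (f : T -> R) :
  measurable_fun [set: T] f -> measurable_fun [set: T] (fun x => (f x)%:E).
Proof. by move=> mf; apply/measurable_EFinP. Qed.

Section CS.
Context {dX : measure_display} {X : measurableType dX} {R : realType}.
Variable mu : {measure set X -> \bar R}.

Lemma CS_L2 (g Dd : X -> R) : measurable_fun [set: X] g -> (forall x, 0 <= Dd x) ->
  measurable_fun [set: X] Dd -> (\int[mu]_x (Dd x)%:E <= 1)%E ->
  (\int[mu]_x (`|g x| * Dd x)%:E
    <= (Num.sqrt 2)%:E * poweR (\int[mu]_x (g x ^+ 2 * Dd x)%:E) 2^-1)%E.
Proof.
move=> mg hD0 mD hD1.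
have mg2 : measurable_fun [set: X] (fun x => g x ^+ 2 * Dd x).
  by apply: measurable_funM => //; exact: measurable_funX.
have S0 : (0 <= \int[mu]_x (g x ^+ 2 * Dd x)%:E)%E.
  by apply: integral_ge0 => x _; rewrite lee_fin mulr_ge0 // sqr_ge0.
have s20 : 0 < Num.sqrt (2 : R) by rewrite sqrtr_gt0.
have [Sfin|] := boolP ((\int[mu]_x (g x ^+ 2 * Dd x)%:E)%E \is a fin_num); last first.
  rewrite ge0_fin_numE // -leNgt leye_eq => /eqP ->.
  by rewrite poweRyr ?invr_neq0 // gt0_muley ?leey // lte_fin.
set s := fine (\int[mu]_x (g x ^+ 2 * Dd x)%:E)%E.
have sE : (\int[mu]_x (g x ^+ 2 * Dd x)%:E)%E = s%:E by rewrite fineK.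
have s0 : 0 <= s by rewrite -lee_fin -sE.
rewrite sE poweR_EFin powR12_sqrt // -EFinM.
set r := Num.sqrt s.
have r0 : 0 <= r by rewrite sqrtr_ge0.
have rr : r * r = s by rewrite -expr2 sqr_sqrtr.
apply: (@le_trans _ _ r%:E); last first.
  rewrite lee_fin ler_peMl //.
  have h2 : Num.sqrt (2 : R) ^+ 2 = 2 by rewrite sqr_sqrtr.
  rewrite expr2 in h2; nra.
apply/lee_addgt0Pr => e e0.
set t := r + e.
have t0 : 0 < t by rewrite /t; lra.
set u := (2 * t)^-1.
have u0 : 0 < u by rewrite invr_gt0; lra.
have ut : u * (2 * t) = 1 by rewrite mulVf //; apply/lt0r_neq0; lra.
apply: (@le_trans _ _ (\int[mu]_x (u%:E * (g x ^+ 2 * Dd x)%:E + (t / 2)%:E * (Dd x)%:E))%E).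
  apply: ge0_le_integral => //.
  - by move=> x _; rewrite lee_fin mulr_ge0.
  - by apply: mEF; apply: measurable_funM => //; exact: (measurableT_comp (@normr_measurable R setT)).
  - by apply: emeasurable_funD; apply: emeasurable_funM; try exact: measurable_cst; exact: mEF.
  move=> x _; rewrite -!EFinM -EFinD lee_fin.
  have hx := hD0 x.
  have gg : `|g x| ^+ 2 = g x ^+ 2 by rewrite real_normK // num_real.
  have ag := normr_ge0 (g x).
  set a := `|g x|; rewrite -gg.
  have key : a <= u * a ^+ 2 + t / 2.
    have h2 : 0 <= (a - t) ^+ 2 by exact: sqr_ge0.
    nra.
  have := ler_wpM2r hx key; rewrite mulrDl => h.
  by rewrite -/a mulrA.
rewrite ge0_integralD; [|exact: measurableT
  | by move=> x _; rewrite -EFinM lee_fin; apply: mulr_ge0;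
      [exact: ltW | apply: mulr_ge0; [exact: sqr_ge0 | exact: hD0]]
  | by apply: emeasurable_funM; [exact: measurable_cst | exact: mEF]
  | by move=> x _; rewrite -EFinM lee_fin mulr_ge0 //; lra
  | by apply: emeasurable_funM; [exact: measurable_cst | exact: mEF]].
rewrite ge0_integralZl_EFin; [|exact: measurableT
  | by move=> x _; rewrite lee_fin mulr_ge0 // sqr_ge0
  | exact: mEF | exact: ltW].
rewrite ge0_integralZl_EFin; [|exact: measurableT
  | by move=> x _; rewrite lee_fin | exact: mEF | lra].
rewrite sE -EFinM.
apply: (@le_trans _ _ ((u * s)%:E + (t / 2)%:E))%E.
  apply: leeD => //.
  rewrite -[X in (_ <= X)%E]mule1; apply: lee_pmul => //.
    by rewrite lee_fin; lra.
  by apply: integral_ge0 => x _; rewrite lee_fin.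
rewrite -!EFinD lee_fin -rr.
have h1 : u * (r * r) <= u * (t * t).
  by apply: ler_wpM2l; [lra | rewrite /t; nra].
have ut' : u * t = 2^-1 by lra.
have ut2 : u * (t * t) = t / 2 by rewrite mulrA ut' mulrC.
rewrite /t in ut2 h1 *; lra.
Qed.

End CS.

Section Pointwise.
Variable R : realType.

Lemma min_lip (a b c d : R) :
  `|Order.min a b - Order.min c d| <= `|a - c| + `|b - d|.
Proof.
have h1 := ler_norm (a - c); have h2 := ler_norm (c - a).
have h3 := ler_norm (b - d); have h4 := ler_norm (d - b).
rewrite (distrC c a) in h2; rewrite (distrC d b) in h4.
rewrite ler_norml; apply/andP; split;
  rewrite /Order.min; case: ifP => ?; case: ifP => ?; lra.
Qed.

Lemma q_props (Cx e b D dh : R) : 0 <= Cx -> 0 <= e -> 0 <= b -> 0 <= D -> 0 <= dh ->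
  let q := D * (Order.min e (Cx * dh) / dh) in
  let m := Order.min b (Cx * D) in
  [/\ 0 <= q, q <= Cx * D & `|q - m| <= `|e - b| + 2 * Cx * `|dh - D|].
Proof.
move=> C0 e0 b0 D0 dh0.
have hDd := ler_norm (dh - D); have hDd' := ler_norm (D - dh).
rewrite (distrC D dh) in hDd'.
have n0 := normr_ge0 (dh - D).
have [dh00|dhp] := eqVneq dh 0 => q m.
  have m0 : 0 <= m by rewrite /m le_min b0 mulr_ge0.
  have mle : m <= Cx * D by rewrite /m ge_min lexx orbT.
  rewrite /q dh00 invr0 !mulr0; split => //; first by rewrite mulr_ge0.
  have := normr_ge0 (e - b); have := mulr_ge0 C0 D0.
  rewrite !sub0r !normrN (ger0_norm m0) (ger0_norm D0); lra.
have m0 : 0 <= m by rewrite /m le_min b0 mulr_ge0.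
have mle : m <= Cx * D by rewrite /m ge_min lexx orbT.
have dhp' : 0 < dh by rewrite lt0r dhp.
set u := Order.min e (Cx * dh).
have u0 : 0 <= u by rewrite /u le_min e0 mulr_ge0.
have ule : u <= Cx * dh by rewrite /u ge_min lexx orbT.
set r := u / dh.
have r0 : 0 <= r by rewrite /r divr_ge0.
have rCx : r <= Cx by rewrite /r ler_pdivrMr // mulrC.
have ru : r * dh = u by rewrite /r divfK.
have hm := min_lip e (Cx * dh) b (Cx * D).
rewrite -/u -/m -mulrBr normrM (ger0_norm C0) in hm.
have qE : q = D * r by [].
split.
- by rewrite qE mulr_ge0.
- by rewrite qE mulrC ler_wpM2r.
have -> : q - m = (D - dh) * r + (u - m) by rewrite qE mulrBl (mulrC dh) ru; ring.
apply: (le_trans (ler_normD _ _)).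
rewrite normrM (ger0_norm r0) (distrC D dh).
have : `|dh - D| * r <= `|dh - D| * Cx by apply: ler_wpM2l.
lra.
Qed.

Lemma main_pt (C w Ddh Dd Pq Pm : R) : 0 <= w -> w <= C -> 0 <= Dd ->
  0 <= Pq -> Pq <= C * Dd ->
  `|w * Ddh - Pm| <= C * `|Ddh - Dd| + `|w - Pq / Dd| * Dd + `|Pq - Pm|.
Proof.
move=> w0 wC D0 q0 qC.
have C0 : 0 <= C by apply: le_trans wC.
have h1 : `|w * (Ddh - Dd)| <= C * `|Ddh - Dd|.
  by rewrite normrM (ger0_norm w0) ler_wpM2r.
have [D00|Dp] := eqVneq Dd 0.
  have Pq0 : Pq = 0 by apply/eqP; rewrite eq_le q0 andbT; rewrite D00 mulr0 in qC.
  rewrite D00 Pq0 mulr0 addr0 sub0r normrN subr0 in h1 *.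
  have := ler_normD (w * Ddh) (- Pm); rewrite normrN.
  lra.
have Dp' : 0 < Dd by rewrite lt0r Dp.
have -> : w * Ddh - Pm = w * (Ddh - Dd) + ((w - Pq / Dd) * Dd + (Pq - Pm)).
  by rewrite mulrBl divfK //; ring.
apply: (le_trans (ler_normD _ _)).
have := ler_normD ((w - Pq / Dd) * Dd) (Pq - Pm).
rewrite normrM (ger0_norm D0); lra.
Qed.

End Pointwise.

Section PopLemmas.
Context {dX : measure_display} {X : measurableType dX} {R : realType}.
Variables (mu : {sigma_finite_measure set X -> \bar R}) (A : finType).
Variable P : X -> A -> X -> R.
Hypothesis hPm : forall a, measurable_fun [set: X * X] (fun z => P z.1 a z.2).
Hypothesis hPmy : forall x a, measurable_fun [set: X] (P x a).
Hypothesis hP0 : forall x a y, 0 <= P x a y.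
Hypothesis hP1 : forall x a, (\int[mu]_y (P x a y)%:E = 1)%E.

Definition FF (p : X -> A -> R) (d : X -> R) (z : X * X) : \bar R :=
  (\sum_(a : A) P z.1 a z.2 * p z.1 a * d z.1)%:E.

Variable S : X -> R.
Hypothesis hPS : forall x a y, P x a y <= S y.
Hypothesis hS0 : forall y, 0 <= S y.

Definition polok (p : X -> A -> R) := (forall x a, 0 <= p x a) /\ (forall x a, p x a <= 1) /\ (forall a, measurable_fun [set: X] (fun x => p x a)).
Definition denok (d : X -> R) := (forall x, 0 <= d x) /\ measurable_fun [set: X] d.
Definition dens (D : X -> R) := (forall x, 0 <= D x) /\ measurable_fun [set: X] D /\ (\int[mu]_x (D x)%:E = 1)%E.

Section PD.
Variables (p : X -> A -> R) (d : X -> R).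
Hypothesis hp : polok p.
Hypothesis hd : denok d.
Let hp0 : forall x a, 0 <= p x a. Proof. by case: hp. Qed.
Let hp1 : forall x a, p x a <= 1. Proof. by case: hp => _ []. Qed.
Let hpm : forall a, measurable_fun [set: X] (fun x => p x a). Proof. by case: hp => _ []. Qed.
Let hd0 : forall x, 0 <= d x. Proof. by case: hd. Qed.
Let hdm : measurable_fun [set: X] d. Proof. by case: hd. Qed.

Lemma FF_ge0 z : (0 <= FF p d z)%E.
Proof.
rewrite lee_fin; apply: sumr_ge0 => a _.
by rewrite !mulr_ge0.
Qed.

Lemma FF_meas : measurable_fun [set: X * X] (FF p d).
Proof.
apply: mEF; apply: measurable_sum => a.
apply: measurable_funM; first apply: measurable_funM.
- exact: hPm.
- exact: (measurableT_comp (hpm a) measurable_fst).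
- exact: (measurableT_comp hdm measurable_fst).
Qed.

Lemma FF_meas1 y : measurable_fun [set: X] (fun x => FF p d (x, y)).
Proof.
apply: (measurableT_comp FF_meas).
exact: measurable_fun_pair.
Qed.

Lemma Pop_meas : measurable_fun [set: X] (Pop mu P p d).
Proof.
have -> : Pop mu P p d = fine \o fubini_G mu (FF p d) by [].
apply: measurableT_comp; first exact: fine_measurable.
exact: (measurable_fun_fubini_tonelli_G _ FF_meas FF_ge0).
Qed.

Lemma Pop_ge0 y : 0 <= Pop mu P p d y.
Proof.
apply: fine_ge0; apply: integral_ge0 => x _.
exact: (FF_ge0 (x, y)).
Qed.

Lemma FF_inner x : (\int[mu]_y FF p d (x, y) = (\sum_(a : A) p x a * d x)%:E)%E.
Proof.
rewrite /FF /=.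
transitivity (\int[mu]_y (\sum_(a : A) (P x a y * p x a * d x)%:E))%E.
  by apply: eq_integral => y _; rewrite sumEFin.
rewrite (@ge0_integral_sum _ _ _ mu setT measurableT _
  (fun a y => (P x a y * p x a * d x)%:E)); last 2 first.
  by move=> a; apply: mEF; apply: measurable_funM;
    [apply: measurable_funM; [exact: hPmy | exact: measurable_cst] | exact: measurable_cst].
  by move=> a y _; rewrite lee_fin !mulr_ge0.
rewrite -sumEFin; apply: eq_bigr => a _.
transitivity (\int[mu]_y ((p x a * d x)%:E * (P x a y)%:E))%E.
  by apply: eq_integral => y _; rewrite -EFinM; congr EFin; rewrite [X in _ = X]mulrC mulrA.
rewrite ge0_integralZl_EFin //; last by rewrite mulr_ge0.
- by rewrite hP1 mule1.
- by move=> y _; rewrite lee_fin.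
- exact/measurable_EFinP.
Qed.

Lemma FF_tonelli :
  (\int[mu]_y \int[mu]_x FF p d (x, y) = \int[mu]_x (\sum_(a : A) p x a * d x)%:E)%E.
Proof.
rewrite -(fubini_tonelli _ FF_meas FF_ge0).
by apply: eq_integral => x _; rewrite FF_inner.
Qed.

Lemma FF_fin (D : X -> R) (c : R) : dens D -> 0 <= c -> (forall x, d x <= c * D x) -> forall y,
  (\int[mu]_x FF p d (x, y))%E \is a fin_num.
Proof.
move=> [hD0 [hDm hD1]] hc hdc y.
rewrite ge0_fin_numE; last by apply: integral_ge0 => x _; exact: (FF_ge0 (x, y)).
have K0 : 0 <= #|A|%:R * S y * c by rewrite !mulr_ge0.
apply: (@le_lt_trans _ _ (\int[mu]_x ((#|A|%:R * S y * c)%:E * (D x)%:E))%E).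
  apply: ge0_le_integral => //.
  - by move=> x _; exact: (FF_ge0 (x, y)).
  - exact: FF_meas1.
  - by apply: emeasurable_funM; [exact: measurable_cst | exact: mEF].
  move=> x _; rewrite /FF /= -EFinM lee_fin.
  have h1 a : P x a y * p x a * d x <= S y * (c * D x).
    rewrite -[S y]mulr1; apply: ler_pM => //.
    - by rewrite mulr_ge0.
    - exact: ler_pM.
  apply: (le_trans (ler_sum _ (fun a _ => h1 a))).
  by rewrite sumr_const -[_ *+ _]mulr_natl !mulrA.
rewrite ge0_integralZl_EFin //.
- by rewrite hD1 mule1 ltry.
- by move=> x _; rewrite lee_fin.
- exact: mEF.
Qed.

End PD.

Lemma denok_abs (d1 d2 : X -> R) : denok d1 -> denok d2 -> denok (fun x => `|d1 x - d2 x|).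
Proof.
move=> [_ m1] [_ m2]; split => // .
apply: (measurableT_comp (@normr_measurable R setT)).
exact: measurable_funB.
Qed.

Lemma PopE p d y : Pop mu P p d y = fine (\int[mu]_x FF p d (x, y))%E.
Proof. by []. Qed.

Lemma Pop_diff p d1 d2 D c : polok p -> denok d1 -> denok d2 -> dens D -> 0 <= c ->
  (forall x, d1 x <= c * D x) -> (forall x, d2 x <= c * D x) -> forall y,
  ((`|Pop mu P p d1 y - Pop mu P p d2 y|)%:E
    <= \int[mu]_x FF p (fun x => `|d1 x - d2 x|)%R (x, y))%E.
Proof.
move=> hp hd1 hd2 hD hc h1 h2 y.
have hd3 := denok_abs hd1 hd2.
have f1 := FF_fin hp hd1 hD hc h1 y.
have f2 := FF_fin hp hd2 hD hc h2 y.
have c2 : 0 <= c + c by rewrite addr_ge0.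
have h3 : forall x, `|d1 x - d2 x| <= (c + c) * D x.
  move=> x; rewrite mulrDl.
  have := h1 x; have := h2 x; have := (proj1 hd1) x; have := (proj1 hd2) x.
  move=> a b e f; rewrite ler_norml; apply/andP; split; lra.
have f3 := FF_fin hp hd3 hD c2 h3 y.
have key : forall da db, denok da -> denok db ->
    (forall x, da x <= db x + `|d1 x - d2 x|) ->
    (\int[mu]_x FF p da (x, y) <= \int[mu]_x FF p db (x, y)
       + \int[mu]_x FF p (fun x => `|d1 x - d2 x|)%R (x, y))%E.
  move=> da db hda hdb hle.
  rewrite -ge0_integralD //; last 4 first.
  - by move=> x _; exact: (FF_ge0 hp hdb (x, y)).
  - exact: FF_meas1.
  - by move=> x _; exact: (FF_ge0 hp hd3 (x, y)).
  - exact: FF_meas1.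
  apply: ge0_le_integral => //.
  - by move=> x _; exact: (FF_ge0 hp hda (x, y)).
  - exact: FF_meas1.
  - by apply: emeasurable_funD; exact: FF_meas1.
  move=> x _; rewrite /FF /= -EFinD lee_fin -big_split /=.
  apply: ler_sum => a _; rewrite -mulrDr; apply: ler_wpM2l.
    by rewrite mulr_ge0 //; case: hp.
  exact: hle.
have k1 := key d1 d2 hd1 hd2.
have k2 := key d2 d1 hd2 hd1.
rewrite (PopE p d1) (PopE p d2) -(fineK f3) lee_fin.
move: k1 k2; rewrite -(fineK f1) -(fineK f2) -(fineK f3) -!EFinD !lee_fin.
have n1 x : d1 x <= d2 x + `|d1 x - d2 x|.
  by have := ler_norm (d1 x - d2 x); lra.
have n2 x : d2 x <= d1 x + `|d1 x - d2 x|.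
  by have := ler_norm (d2 x - d1 x); rewrite distrC; lra.
move=> k1 k2; have {}k1 := k1 n1; have {}k2 := k2 n2.
by rewrite ler_norml; apply/andP; split; lra.
Qed.


Lemma Pop_leZ p1 d1 p2 d2 k : polok p1 -> denok d1 -> polok p2 -> denok d2 -> 0 <= k ->
  (forall x a, p1 x a * d1 x <= k * (p2 x a * d2 x)) -> forall y,
  (\int[mu]_x FF p2 d2 (x, y))%E \is a fin_num ->
  Pop mu P p1 d1 y <= k * Pop mu P p2 d2 y.
Proof.
move=> hp1 hd1 hp2 hd2 k0 hle y f2.
have I1le : (\int[mu]_x FF p1 d1 (x, y) <= k%:E * \int[mu]_x FF p2 d2 (x, y))%E.
  have -> : (k%:E * \int[mu]_x FF p2 d2 (x, y) =
     \int[mu]_x (k%:E * FF p2 d2 (x, y)))%E.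
    apply/esym; apply: ge0_integralZl; [exact: measurableT | exact: FF_meas1 |
      by move=> x _; exact: (FF_ge0 hp2 hd2 (x, y)) | by rewrite lee_fin].
  apply: ge0_le_integral => //.
  - by move=> x _; exact: (FF_ge0 hp1 hd1 (x, y)).
  - exact: FF_meas1.
  - by apply: emeasurable_funM; [exact: measurable_cst | exact: FF_meas1].
  move=> x _; rewrite /FF /= -EFinM lee_fin mulr_sumr.
  apply: ler_sum => a _; rewrite -!mulrA [X in _ <= X]mulrCA.
  by apply: ler_wpM2l => //; exact: hle.
have I10 : (0 <= \int[mu]_x FF p1 d1 (x, y))%E.
  by apply: integral_ge0 => x _; exact: (FF_ge0 hp1 hd1 (x, y)).
have f1 : (\int[mu]_x FF p1 d1 (x, y))%E \is a fin_num.
  rewrite ge0_fin_numE //; apply: (le_lt_trans I1le).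
  by rewrite -(fineK f2) -EFinM ltry.
move: I1le; rewrite (PopE p1) (PopE p2) -(fineK f1) -(fineK f2) -EFinM lee_fin.
by rewrite !fineK.
Qed.

Lemma Pop_int p d D c : polok p -> denok d -> dens D -> 0 <= c ->
  (forall x, d x <= c * D x) ->
  (\int[mu]_y (Pop mu P p d y)%:E = \int[mu]_x (\sum_(a : A) p x a * d x)%:E)%E.
Proof.
move=> hp hd hD hc hdc.
rewrite -(FF_tonelli hp hd); apply: eq_integral => y _.
by rewrite PopE fineK //; exact: (FF_fin hp hd hD hc hdc).
Qed.

Lemma Pop_L1 p d1 d2 D c : polok p -> denok d1 -> denok d2 -> dens D -> 0 <= c ->
  (forall x, d1 x <= c * D x) -> (forall x, d2 x <= c * D x) ->
  (forall x, \sum_(a : A) p x a <= 1) ->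
  (\int[mu]_y (`|Pop mu P p d1 y - Pop mu P p d2 y|)%:E
    <= \int[mu]_x (`|d1 x - d2 x|)%:E)%E.
Proof.
move=> hp hd1 hd2 hD hc h1 h2 hs.
have hd3 := denok_abs hd1 hd2.
apply: (@le_trans _ _ (\int[mu]_y \int[mu]_x FF p (fun x => `|d1 x - d2 x|)%R (x, y))%E).
  apply: ge0_le_integral => //.
  - apply: mEF; apply: (measurableT_comp (@normr_measurable R setT)).
    by apply: measurable_funB; exact: Pop_meas.
  - exact: (measurable_fun_fubini_tonelli_G _ (FF_meas hp hd3) (FF_ge0 hp hd3)).
  by move=> y _; exact: (Pop_diff hp hd1 hd2 hD hc h1 h2).
rewrite (FF_tonelli hp hd3).
apply: ge0_le_integral => //.
- by move=> x _; rewrite lee_fin sumr_ge0 // => a _; rewrite mulr_ge0 //; case: hp.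
- apply: mEF; apply: measurable_sum => a; apply: measurable_funM.
    by case: hp => _ [].
  by case: hd3.
- by apply: mEF; case: hd3.
move=> x _; rewrite lee_fin -mulr_suml.
by apply: ler_piMl => //; case: hd3.
Qed.

Lemma main_abs (pi piD : X -> A -> R) (Cx Ca : R) (D e b dh Ddh w : X -> R) :
  polok pi -> (forall x, \sum_(a : A) pi x a = 1) -> polok piD ->
  (forall x, \sum_(a : A) piD x a = 1) -> 0 <= Cx -> 0 <= Ca -> dens D -> denok e -> denok b -> dens dh ->
  denok Ddh -> denok w -> (forall x, w x <= Cx * Ca) ->
  (L1 mu (fun x => w x * Ddh x
      - Pop mu P (clipPol pi piD Ca) (fun x => Order.min (b x) (Cx * D x)) x)%R
   <= L1 mu (fun x => e x - b x)%R
      + (2 * Cx)%R%:E * L1 mu (fun x => dh x - D x)%R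
      + (Cx * Ca)%R%:E * L1 mu (fun x => Ddh x - Pop mu P piD D x)%R
      + (Num.sqrt 2)%:E *
        L2w mu (Pop mu P piD D)
          (fun x => w x
             - Eop mu P (clipPol pi piD Ca) (Pop mu P piD D)
                 (fun y => D y * wtil Cx e dh y) x)%R)%E.
Proof.
move=> hpi hpi1 hpiD hpiDs hCx hCa hD he hb hdh hDdh hw hwC.
set pb := clipPol pi piD Ca.
set Dd := Pop mu P piD D.
set q := fun y => D y * wtil Cx e dh y.
set m := fun x => Order.min (b x) (Cx * D x).
have [hD0 [hDm hD1]] := hD.
have [hdh0 [hdhm hdh1]] := hdh.
have [he0 hem] := he.
have [hb0 hbm] := hb.
have [hDdh0 hDdhm] := hDdh.
have [hw0 hwm] := hw.
have [hpi0 [hpi1' hpim]] := hpi.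
have [hpiD0 [hpiD1 hpiDm]] := hpiD.
have hpb : polok pb.
  split; [|split].
  - by move=> x a; rewrite /pb /clipPol le_min hpi0 mulr_ge0.
  - by move=> x a; rewrite /pb /clipPol ge_min hpi1'.
  - move=> a; exact: (measurable_minr (f := fun x => pi x a) (g := fun x => Ca * piD x a)
      (hpim a) (measurable_funM (measurable_cst _) (hpiDm a))).
have pbC x a : pb x a <= Ca * piD x a by rewrite /pb /clipPol ge_min lexx orbT.
have hpbs x : \sum_(a : A) pb x a <= 1.
  rewrite -(hpi1 x); apply: ler_sum => a _.
  by rewrite /pb /clipPol ge_min lexx.
have hqp x := q_props (hCx) (he0 x) (hb0 x) (hD0 x) (hdh0 x).
have hqd : denok q.
  split; first by move=> x; have [] := hqp x.
  apply: measurable_funM => //; apply: measurable_divr => //.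
  exact: (measurable_minr (f := e) (g := fun x => Cx * dh x) hem
     (measurable_funM (measurable_cst _) hdhm)).
have hmd : denok m.
  split; first by move=> x; rewrite /m le_min hb0 mulr_ge0.
  exact: (measurable_minr (f := b) (g := fun x => Cx * D x) hbm
     (measurable_funM (measurable_cst _) hDm)).
have hDd : denok D by [].
have hqC x : q x <= Cx * D x by have [] := hqp x.
have hmC x : m x <= Cx * D x by rewrite /m ge_min lexx orbT.
have hD1C x : D x <= 1 * D x by rewrite mul1r.
have finD y := FF_fin hpiD hDd hD ler01 hD1C y.
have Dd0 y : 0 <= Dd y by exact: Pop_ge0.
have mDd : measurable_fun [set: X] Dd by exact: Pop_meas.
have intDd : (\int[mu]_x (Dd x)%:E = 1)%E.
  rewrite (Pop_int hpiD hDd hD ler01 hD1C) -hD1.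
  by apply: eq_integral => x _; rewrite -mulr_suml hpiDs mul1r.
have CC : 0 <= Cx * Ca by rewrite mulr_ge0.
have hPqC y : Pop mu P pb q y <= (Cx * Ca) * Dd y.
  apply: (Pop_leZ hpb hqd hpiD hDd CC) => //.
  move=> x a.
  have -> : Cx * Ca * (piD x a * D x) = (Ca * piD x a) * (Cx * D x) by ring.
  apply: ler_pM => //; first by case: hpb => ->.
  by case: hqd.
have Pq0 y : 0 <= Pop mu P pb q y by exact: Pop_ge0.
have mPq : measurable_fun [set: X] (Pop mu P pb q) by exact: Pop_meas.
have mPm : measurable_fun [set: X] (Pop mu P pb m) by exact: Pop_meas.
set g := fun x => w x - Pop mu P pb q x / Dd x.
have mg : measurable_fun [set: X] g.
  by apply: measurable_funB => //; exact: measurable_divr.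
have mabs (f : X -> R) : measurable_fun [set: X] f ->
    measurable_fun [set: X] (fun x => (`|f x|)%:E).
  by move=> mf; apply: mEF; exact: (measurableT_comp (@normr_measurable R setT)).
have m3 : measurable_fun [set: X] (fun x => (`|Pop mu P pb q x - Pop mu P pb m x|)%:E).
  by apply: mabs; exact: measurable_funB.
have m1 : measurable_fun [set: X] (fun x => ((Cx * Ca) * `|Ddh x - Dd x|)%:E).
  apply: mEF; apply: measurable_funM; first exact: measurable_cst.
  by apply: (measurableT_comp (@normr_measurable R setT)); exact: measurable_funB.
have m2 : measurable_fun [set: X] (fun x => (`|g x| * Dd x)%:E).
  apply: mEF; apply: measurable_funM => //.
  exact: (measurableT_comp (@normr_measurable R setT)).
apply: (@le_trans _ _ (\int[mu]_x ((`|Pop mu P pb q x - Pop mu P pb m x|)%:E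
    + ((Cx * Ca) * `|Ddh x - Dd x|)%:E + (`|g x| * Dd x)%:E))%E).
  apply: ge0_le_integral => //.
  - apply: mabs; apply: measurable_funB => //; exact: measurable_funM.
  - by apply: emeasurable_funD => //; exact: emeasurable_funD.
  move=> x _; rewrite -!EFinD lee_fin.
  have := @main_pt R (Cx * Ca) (w x) (Ddh x) (Dd x) (Pop mu P pb q x) (Pop mu P pb m x)
    (hw0 x) (hwC x) (Dd0 x) (Pq0 x) (hPqC x).
  rewrite /g; lra.
rewrite ge0_integralD; [|exact: measurableT
  | by move=> x _; rewrite -EFinD lee_fin addr_ge0 // mulr_ge0
  | exact: emeasurable_funD
  | by move=> x _; rewrite lee_fin mulr_ge0
  | exact: m2].
rewrite ge0_integralD; [|exact: measurableT
  | by move=> x _; rewrite lee_fin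
  | exact: m3
  | by move=> x _; rewrite lee_fin mulr_ge0
  | exact: m1].
have -> : (\int[mu]_x ((Cx * Ca) * `|Ddh x - Dd x|)%:E
    = (Cx * Ca)%:E * L1 mu (fun x => Ddh x - Dd x)%R)%E.
  rewrite /L1 -ge0_integralZl_EFin //; last by apply: mabs; exact: measurable_funB.
apply: leeD; first apply: leeD.
- apply: (le_trans (Pop_L1 hpb hqd hmd hD hCx hqC hmC hpbs)).
  have mA : measurable_fun [set: X] (fun x => (`|e x - b x|)%:E).
    by apply: mabs; exact: measurable_funB.
  have mB : measurable_fun [set: X] (fun x => ((2 * Cx) * `|dh x - D x|)%:E).
    apply: mEF; apply: measurable_funM; first exact: measurable_cst.
    by apply: (measurableT_comp (@normr_measurable R setT)); exact: measurable_funB.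
  apply: (@le_trans _ _ (\int[mu]_x ((`|e x - b x|)%:E + ((2 * Cx) * `|dh x - D x|)%:E))%E).
    apply: ge0_le_integral => //.
    - by apply: mabs; apply: measurable_funB; [case: hqd | case: hmd].
    - exact: emeasurable_funD.
    move=> x _; rewrite -EFinD lee_fin.
    by have [_ _ h] := hqp x.
  rewrite ge0_integralD; [|exact: measurableT
    | by move=> x _; rewrite lee_fin
    | exact: mA
    | by move=> x _; rewrite lee_fin mulr_ge0 // mulr_ge0
    | exact: mB].
  apply: leeD; first exact: le_refl.
  rewrite /L1 -ge0_integralZl_EFin //.
    by apply: mabs; exact: measurable_funB.
  by rewrite mulr_ge0.
- exact: le_refl.
- by apply: CS_L2 => //; rewrite intDd.
Qed.

End PopLemmas.
Theorem lemma1 (dX : measure_display) (X : measurableType dX) (R : realType)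
  (mu : {sigma_finite_measure set X -> \bar R}) (A : finType)
  (H dd : nat)
  (phi : nat -> X -> A -> 'I_dd -> R) (mus : nat -> X -> 'I_dd -> R) (Bmu : R)
  (d0 : X -> R) (pi piD : nat -> X -> A -> R) (Cx Ca : nat -> R)
  (dD : nat -> X -> R)
  (Dmle Dreg : nat -> seq (X * A * X))
  (dDhat dDdaghat what dhat : nat -> X -> R) :
  (* low-rank MDP *)
  (forall h a i, measurable_fun setT (fun x => phi h x a i)) ->
  (forall h i, measurable_fun setT (fun x => mus h x i)) ->
  (forall h x a i, `|phi h x a i| <= 1) ->
  (forall h, (\int[mu]_x (\sum_(i < dd) `|mus h x i|)%:E <= Bmu%:E)%E) ->
  (forall h x a x', 0 <= Plr phi mus h x a x') ->
  (forall h x a, (\int[mu]_x' (Plr phi mus h x a x')%:E = 1)%E) ->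
  (* initial distribution, policies, offline marginals, clipping constants *)
  is_density mu d0 ->
  (forall h, is_policy (pi h)) ->
  (forall h, is_policy (piD h)) ->
  (forall h, is_density mu (dD h)) ->
  (forall h, 0 <= Cx h) -> (forall h, 0 <= Ca h) ->
  (* FORC, iterations h = k.+1 = 1, ..., H *)
  dhat 0%N = d0 ->
  (forall k, (k < H)%N ->
     FclsIdx mu mus k (dDhat k) /\
     (forall f, FclsIdx mu mus k f ->
        \prod_(t <- Dmle k) f t.1.1 <= \prod_(t <- Dmle k) dDhat k t.1.1)) ->
  (forall k, (k < H)%N ->
     Fcls mu (mus k) (dDdaghat k) /\
     (forall f, Fcls mu (mus k) f ->
        \prod_(t <- Dmle k) f t.2 <= \prod_(t <- Dmle k) dDdaghat k t.2)) ->
  (forall k, (k < H)%N ->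
     Wcls (mus k) (Cx k * Ca k) (what k.+1) /\
     (forall w, Wcls (mus k) (Cx k * Ca k) w ->
        regLoss (Dreg k) (wtil (Cx k) (dhat k) (dDhat k))
          (clipPol (pi k) (piD k) (Ca k)) (piD k) (what k.+1)
        <= regLoss (Dreg k) (wtil (Cx k) (dhat k) (dDhat k))
          (clipPol (pi k) (piD k) (Ca k)) (piD k) w)) ->
  (forall k, (k < H)%N -> dhat k.+1 = (fun x => what k.+1 x * dDdaghat k x)) ->
  (* conclusion, for h = k.+1 in {1, ..., H-1} *)
  let dDdag := fun k => Pop mu (Plr phi mus k) (piD k) (dD k) in
  let db := dbar mu (Plr phi mus) pi piD Cx Ca d0 dD in
  forall k, (k.+1 < H)%N ->
  (L1 mu (fun x => dhat k.+1 x - db k.+1 x)%R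
   <= L1 mu (fun x => dhat k x - db k x)%R
      + (2 * Cx k)%R%:E * L1 mu (fun x => dDhat k x - dD k x)%R
      + (Cx k * Ca k)%R%:E * L1 mu (fun x => dDdaghat k x - dDdag k x)%R
      + (Num.sqrt 2)%:E *
        L2w mu (dDdag k)
          (fun x => what k.+1 x
             - Eop mu (Plr phi mus k) (clipPol (pi k) (piD k) (Ca k)) (dDdag k)
                 (fun y => dD k y * wtil (Cx k) (dhat k) (dDhat k) y) x)%R)%E.
Proof.
move=> hphim hmusm hphi1 hBmu hP0 hP1 hd0 hpi hpiD hdD hCx hCa hdhat0 hFmle hFdag hW hdhat.
have hPm h a : measurable_fun [set: X * X] (fun z : X * X => Plr phi mus h z.1 a z.2).
  apply: measurable_sum => i; apply: measurable_funM.
  - exact: (measurableT_comp (hphim h a i) measurable_fst).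
  - exact: (measurableT_comp (hmusm h i) measurable_snd).
have hPmy h x a : measurable_fun [set: X] (Plr phi mus h x a).
  apply: measurable_sum => i; apply: measurable_funM;
    [exact: measurable_cst | exact: hmusm].
set S := fun h y => \sum_(i < dd) `|mus h y i|.
have hS0 h y : 0 <= S h y by apply: sumr_ge0 => i _.
have hPS h x a y : Plr phi mus h x a y <= S h y.
  apply: ler_sum => i _.
  apply: (le_trans (ler_norm _)); rewrite normrM.
  by apply: ler_piMl => //; exact: hphi1.
have polP (p : X -> A -> R) : is_policy p -> polok p /\ (forall x, \sum_(a : A) p x a = 1).
  move=> [p0 [p1 pm]]; split => //; split => //; split => // x a.
  rewrite -(p1 x) (bigD1 a) //= lerDl.
  by apply: sumr_ge0 => ? _.
have densP (f : X -> R) : is_density mu f -> dens mu f.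
  by move=> [fm [f0 f1]].
have denP (f : X -> R) : dens mu f -> denok f.
  by move=> [f0 [fm _]].
have linm (th : 'I_dd -> R) h : measurable_fun [set: X] (lin (mus h) th).
  apply: measurable_sum => i; apply: measurable_funM;
    [exact: hmusm | exact: measurable_cst].
have Wden h C (w : X -> R) : Wcls (mus h) C w -> denok w /\ (forall x, w x <= C).
  move=> [[thu [thd wE]] wb]; split; last first.
    by move=> x; have [_ /(le_trans (ler_norm _))] := wb x.
  split; first by move=> x; case: (wb x).
  have -> : w = (fun x => lin (mus h) thu x / lin (mus h) thd x).
    by apply/funext => x; rewrite wE.
  exact: measurable_divr.
have hdb j : denok (dbar mu (Plr phi mus) pi piD Cx Ca d0 dD j).
  elim: j => [|j IH] /=; first exact/denP/densP.
  have [hpj _] := polP _ (hpi j).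
  have hpbj : polok (clipPol (pi j) (piD j) (Ca j)).
    have [hpiDj _] := polP _ (hpiD j).
    case: hpj => p0 [p1 pm]; case: hpiDj => q0 [q1 qm].
    split; [|split].
    - by move=> x a; rewrite /clipPol le_min p0 mulr_ge0.
    - by move=> x a; rewrite /clipPol ge_min p1.
    - move=> a; exact: (measurable_minr (f := fun x => pi j x a)
        (g := fun x => Ca j * piD j x a) (pm a) (measurable_funM (measurable_cst _) (qm a))).
  have hm : denok (fun x => Order.min (dbar mu (Plr phi mus) pi piD Cx Ca d0 dD j x) (Cx j * dD j x)).
    case: IH => b0 bm; have [D0 [Dm _]] := densP _ (hdD j).
    split; first by move=> x; rewrite le_min b0 mulr_ge0.
    exact: (measurable_minr bm (measurable_funM (measurable_cst _) Dm)).
  split; first exact: (Pop_ge0 mu (hP0 j) hpbj hm).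
  exact: (Pop_meas mu (hPm j) (hP0 j) hpbj hm).
move=> dDdag db k hk.
have hkH : (k < H)%N by apply: ltnW.
rewrite (hdhat k hkH) /db /=.
have he : denok (dhat k).
  case: k hk hkH => [|j] hk hkH; first by rewrite hdhat0; exact/denP/densP.
  have hjH : (j < H)%N by apply: ltnW.
  rewrite (hdhat j hjH).
  have [[hw0 hwm] _] := Wden _ _ _ (proj1 (hW j hjH)).
  have [_ [hdd0 [hddm _]]] := (proj1 (hFdag j hjH)).
  split; first by move=> x; rewrite mulr_ge0.
  exact: measurable_funM.
have [hpi' hpis] := polP _ (hpi k).
have [hpiD' hpiDs] := polP _ (hpiD k).
have hD := densP _ (hdD k).
have hdh : dens mu (dDhat k).
  have := proj1 (hFmle k hkH); case: (k) => [|j] /=; first exact: densP.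
  by move=> [_ hd]; exact: densP.
have hDdh : denok (dDdaghat k).
  by have [_ hd] := proj1 (hFdag k hkH); exact/denP/densP.
have [hw hwC] := Wden _ _ _ (proj1 (hW k hkH)).
exact: (main_abs (hPm k) (hPmy k) (hP0 k) (hP1 k) (hPS k) (hS0 k) hpi' hpis hpiD' hpiDs
  (hCx k) (hCa k) hD he (hdb k) hdh hDdh hw hwC).
Qed.
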